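(* Let $(a_k)_{k\ge1}$ be a sequence of positive real numbers for which there exist $\rho\in(0,1)$, constants $c,C>0$ and $m\in\mathbb{N}$ such that $ck^m\rho^k\le a_k\le Ck^m\rho^k$ for all sufficiently large $k$. Define $K(\epsilon)=\min\{k\in\mathbb{N}: a_k<\epsilon\}$ for $\epsilon>0$. Then, as $\epsilon\to0$, $$K(\epsilon)=\Omega\left(\frac{\rho}{1-\rho}\ln(1/\epsilon)\right)\quad\text{and}\quad K(\epsilon)=O\left(\frac{1}{1-\rho}\ln(1/\epsilon)\right),$$ and consequently $K(\epsilon)=\Theta\left(\frac{\rho}{1-\rho}\ln(1/\epsilon)\right)$. *)

(* Defs.v *)
From Stdlib Require Import Reals Lra Lia.
Open Scope R_scope.

(* [IsK a eps k]: k is the minimum of { k in N, k >= 1 : a_k < eps },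
   i.e. k = K(eps) in the paper (sequence indexed from 1; a 0 is unused). *)
Definition IsK (a : nat -> R) (eps : R) (k : nat) : Prop :=
  (1 <= k)%nat /\ a k < eps /\
  (forall j : nat, (1 <= j)%nat -> a j < eps -> (k <= j)%nat).

Definition K_Omega (a : nat -> R) (g : R -> R) : Prop :=
  exists c1 eps0, 0 < c1 /\ 0 < eps0 /\
    forall eps, 0 < eps < eps0 ->
      exists k, IsK a eps k /\ c1 * g eps <= INR k.

Definition K_O (a : nat -> R) (g : R -> R) : Prop :=
  exists C1 eps0, 0 < C1 /\ 0 < eps0 /\
    forall eps, 0 < eps < eps0 ->
      exists k, IsK a eps k /\ INR k <= C1 * g eps.

(* Main.v *)
Require Import Defs.
From Stdlib Require Import Reals Lra Lia Wf_nat ZArith.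
Open Scope R_scope.

Lemma nat_ceil (x : R) : 0 <= x -> exists n : nat, x < INR n /\ INR n <= x + 1.
Proof.
  intro Hx. destruct (archimed x) as [H1 H2].
  assert (Hz : (0 <= up x)%Z).
  { apply le_IZR. simpl. lra. }
  exists (Z.to_nat (up x)). rewrite INR_IZR_INZ, Z2Nat.id by exact Hz. lra.
Qed.

Lemma exp_pow_INR (x : R) (m : nat) : exp x ^ m = exp (INR m * x).
Proof.
  induction m as [|m IH].
  - simpl. rewrite Rmult_0_l, exp_0. reflexivity.
  - rewrite S_INR. simpl pow. rewrite IH, <- exp_plus. f_equal. ring.
Qed.

Lemma pow_exp (rho : R) (k : nat) : 0 < rho -> rho ^ k = exp (INR k * ln rho).
Proof.
  intro H. rewrite <- Rpower_pow by exact H. reflexivity.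
Qed.

Lemma exK (a : nat -> R) (eps : R) (k0 : nat) :
  (1 <= k0)%nat -> a k0 < eps -> exists k, IsK a eps k.
Proof.
  intros H1 H2.
  destruct (dec_inh_nat_subset_has_unique_least_element
              (fun j => (1 <= j)%nat /\ a j < eps)) as [k [[[Hk1 Hk2] Hmin] _]].
  - intro n. destruct (le_lt_dec 1 n); destruct (Rlt_dec (a n) eps);
      [left; auto | right; intros [_ ?]; auto | right; intros [? _]; lia | right; intros [? _]; lia].
  - exists k0. auto.
  - exists k. split; [auto|split; [auto|]]. intros j Hj Hj'. apply Hmin. auto.
Qed.

Lemma minpos (a : nat -> R) (M : nat) :
  (forall k, (1 <= k)%nat -> 0 < a k) ->
  exists d, 0 < d /\ forall j, (1 <= j)%nat -> (j < M)%nat -> d <= a j.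
Proof.
  intro Hpos. induction M as [|M IH].
  - exists 1. split; [lra|]. intros; lia.
  - destruct IH as [d [Hd Hj]].
    destruct (le_lt_dec 1 M) as [HM|HM].
    + exists (Rmin d (a M)). split.
      * apply Rmin_pos; auto.
      * intros j H1 H2. destruct (Nat.eq_dec j M) as [->|Hne].
        -- apply Rmin_r.
        -- eapply Rle_trans; [apply Rmin_l|]. apply Hj; lia.
    + exists d. split; auto. intros j H1 H2. apply Hj; lia.
Qed.

Lemma exp_le' (x y : R) : x <= y -> exp x <= exp y.
Proof.
  intro H. destruct (Rle_lt_or_eq_dec _ _ H) as [H'|H'].
  - left. apply exp_increasing. exact H'.
  - rewrite H'. lra.
Qed.

Lemma lin_le_exp (x : R) : 1 + x <= exp x.
Proof.
  destruct (Req_dec x 0) as [->|H].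
  - rewrite exp_0. lra.
  - left. apply exp_ineq1. exact H.
Qed.

Lemma tail (a : nat -> R) (r C : R) (m N : nat) :
  0 < r -> 0 < C ->
  (forall k, (N <= k)%nat -> a k <= C * INR k ^ m * exp (INR k * (- r))) ->
  exists D, 0 < D /\ forall k, (N <= k)%nat -> a k <= D * exp (- (r / 2) * INR k).
Proof.
  intros Hr HC Hb.
  set (t := r / (2 * (INR m + 1))).
  assert (Hm : 0 <= INR m) by apply pos_INR.
  assert (Ht : 0 < t).
  { unfold t. apply Rdiv_lt_0_compat; lra. }
  assert (Hmt : INR m * t <= r / 2).
  { unfold t. apply Rmult_le_reg_r with (2 * (INR m + 1)); [lra|].
    field_simplify; [|lra]. nra. }
  exists (C * (/ t) ^ m). split.
  { apply Rmult_lt_0_compat; auto. apply pow_lt. apply Rinv_0_lt_compat; auto. }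
  intros k Hk.
  assert (Hk0 : 0 <= INR k) by apply pos_INR.
  assert (H1 : INR k <= exp (t * INR k) * / t).
  { pose proof (lin_le_exp (t * INR k)).
    apply Rmult_le_reg_r with t; auto.
    rewrite Rmult_assoc, Rinv_l by lra. nra. }
  assert (H2 : INR k ^ m <= exp (INR m * (t * INR k)) * (/ t) ^ m).
  { rewrite <- exp_pow_INR, <- Rpow_mult_distr. apply pow_incr. split; auto. }
  eapply Rle_trans; [apply Hb; exact Hk|].
  assert (H3 : exp (INR m * (t * INR k)) * exp (INR k * - r) <= exp (- (r / 2) * INR k)).
  { rewrite <- exp_plus. apply exp_le'. nra. }
  pose proof (exp_pos (INR k * - r)).
  assert (0 <= (/ t) ^ m) by (apply pow_le; left; apply Rinv_0_lt_compat; auto).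
  apply Rle_trans with (C * (exp (INR m * (t * INR k)) * (/ t) ^ m) * exp (INR k * - r)).
  { apply Rmult_le_compat_r; [lra|]. apply Rmult_le_compat_l; lra. }
  replace (C * (exp (INR m * (t * INR k)) * (/ t) ^ m) * exp (INR k * - r))
    with (C * (/ t) ^ m * (exp (INR m * (t * INR k)) * exp (INR k * - r))) by ring.
  apply Rmult_le_compat_l; [|exact H3].
  apply Rmult_le_pos; lra.
Qed.

Theorem lemmaB1 (a : nat -> R) (rho c C : R) (m : nat)
  (Hpos : forall k : nat, (1 <= k)%nat -> 0 < a k)
  (Hrho : 0 < rho < 1) (Hc : 0 < c) (HC : 0 < C)
  (Hbnd : exists N : nat, forall k : nat, (N <= k)%nat ->
            c * INR k ^ m * rho ^ k <= a k /\ a k <= C * INR k ^ m * rho ^ k) :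
  K_Omega a (fun eps => rho / (1 - rho) * ln (1 / eps)) /\
  K_O a (fun eps => 1 / (1 - rho) * ln (1 / eps)) /\
  (K_Omega a (fun eps => rho / (1 - rho) * ln (1 / eps)) /\
   K_O a (fun eps => rho / (1 - rho) * ln (1 / eps))).
Proof.
  destruct Hbnd as [N HN].
  set (r := - ln rho).
  assert (Hr : 0 < r).
  { unfold r. assert (ln rho < ln 1) by (apply ln_increasing; lra). rewrite ln_1 in H. lra. }
  assert (Hrk : forall k, rho ^ k = exp (INR k * - r)).
  { intro k. rewrite pow_exp by lra. unfold r. f_equal. ring. }
  destruct (tail a r C m N Hr HC) as [D [HD HDb]].
  { intros k Hk. rewrite <- Hrk. apply HN. exact Hk. }
  set (M := Nat.max N 1).
  assert (HL : forall eps, 0 < eps -> ln (1 / eps) = - ln eps).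
  { intros eps He. unfold Rdiv. rewrite Rmult_1_l. apply ln_Rinv. exact He. }
  assert (HM0 : 0 <= INR M) by apply pos_INR.
  set (B := INR M + 1 + 2 * Rabs (ln D) / r + 2 / r).
  assert (HB : 0 < B).
  { unfold B. pose proof (Rabs_pos (ln D)).
    assert (0 <= 2 * Rabs (ln D) / r) by (apply Rmult_le_pos; [lra| left; apply Rinv_0_lt_compat; lra]).
    assert (0 < 2 / r) by (apply Rdiv_lt_0_compat; lra). lra. }
  assert (U : forall eps, 0 < eps < 1 -> exists k0, (1 <= k0)%nat /\ a k0 < eps /\
             INR k0 <= INR M + 1 + 2 * Rabs (ln D) / r + 2 / r * (- ln eps)).
  { intros eps [He1 He2].
    assert (Hle : ln eps < 0) by (rewrite <- ln_1; apply ln_increasing; lra).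
    set (x := 2 * (Rabs (ln D) + - ln eps) / r).
    assert (Hx : 0 <= x).
    { unfold x. pose proof (Rabs_pos (ln D)). apply Rmult_le_pos; [lra| left; apply Rinv_0_lt_compat; lra]. }
    destruct (nat_ceil x Hx) as [n [Hn1 Hn2]].
    exists (M + n)%nat. split; [unfold M; lia|]. split.
    - eapply Rle_lt_trans; [apply HDb; unfold M; lia|].
      assert (Hlt : - (r / 2) * INR (M + n) < - ln D + ln eps).
      { rewrite plus_INR. unfold x in Hn1.
        assert (Rabs (ln D) + - ln eps < r / 2 * INR n).
        { apply Rmult_lt_reg_l with (2 / r); [apply Rdiv_lt_0_compat; lra|].
          replace (2 / r * (r / 2 * INR n)) with (INR n) by (field; lra).
          replace (2 / r * (Rabs (ln D) + - ln eps)) with (2 * (Rabs (ln D) + - ln eps) / r) by (field; lra).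
          exact Hn1. }
        pose proof (Rle_abs (ln D)). nra. }
      apply exp_increasing in Hlt.
      rewrite exp_plus, exp_Ropp, !exp_ln in Hlt by lra.
      apply Rmult_lt_compat_l with (r := D) in Hlt; [|lra].
      replace (D * (/ D * eps)) with eps in Hlt by (field; lra). exact Hlt.
    - rewrite plus_INR. unfold x in Hn2.
      replace (2 / r * - ln eps) with (2 * - ln eps / r) by (field; lra).
      replace (2 * (Rabs (ln D) + - ln eps) / r) with (2 * Rabs (ln D) / r + 2 * - ln eps / r) in Hn2 by (field; lra).
      lra. }
  assert (He1 : exp (-1) < 1) by (rewrite <- exp_0; apply exp_increasing; lra).
  assert (KO : forall C0, 0 < C0 -> K_O a (fun eps => C0 / (1 - rho) * ln (1 / eps))).
  { intros C0 HC0. exists (B * (1 - rho) / C0), (exp (-1)). split.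
    { apply Rdiv_lt_0_compat; [apply Rmult_lt_0_compat|]; lra. }
    split; [apply exp_pos|].
    intros eps [Hep1 Hep2].
    destruct (U eps ltac:(lra)) as [k0 [Hk01 [Hk02 Hk03]]].
    destruct (exK a eps k0 Hk01 Hk02) as [k Hk].
    exists k. split; [exact Hk|].
    destruct Hk as [_ [_ Hmin]].
    assert (Hkk : INR k <= INR k0) by (apply le_INR; apply Hmin; auto).
    rewrite HL by lra.
    assert (Hl1 : 1 < - ln eps).
    { assert (ln eps < ln (exp (-1))) by (apply ln_increasing; lra). rewrite ln_exp in H. lra. }
    replace (B * (1 - rho) / C0 * (C0 / (1 - rho) * - ln eps)) with (B * - ln eps) by (field; lra).
    unfold B.
    pose proof (Rabs_pos (ln D)).
    assert (0 <= 2 * Rabs (ln D) / r) by (apply Rmult_le_pos; [lra| left; apply Rinv_0_lt_compat; lra]).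
    assert (0 < 2 / r) by (apply Rdiv_lt_0_compat; lra).
    nra. }
  assert (KOm : K_Omega a (fun eps => rho / (1 - rho) * ln (1 / eps))).
  { destruct (minpos a M Hpos) as [d [Hd Hdm]].
    exists ((1 - rho) / (2 * r * rho)), (Rmin d (Rmin (exp (-1)) (exp (- (2 * Rabs (ln c)))))).
    split. { apply Rdiv_lt_0_compat; [lra|]. apply Rmult_lt_0_compat; lra. }
    split. { apply Rmin_pos; [lra|apply Rmin_pos; apply exp_pos]. }
    intros eps [Hep1 Hep2].
    pose proof (Rmin_l d (Rmin (exp (-1)) (exp (- (2 * Rabs (ln c)))))).
    pose proof (Rmin_r d (Rmin (exp (-1)) (exp (- (2 * Rabs (ln c)))))).
    pose proof (Rmin_l (exp (-1)) (exp (- (2 * Rabs (ln c))))).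
    pose proof (Rmin_r (exp (-1)) (exp (- (2 * Rabs (ln c))))).
    destruct (U eps ltac:(lra)) as [k0 [Hk01 [Hk02 Hk03]]].
    destruct (exK a eps k0 Hk01 Hk02) as [k Hk].
    exists k. split; [exact Hk|].
    destruct Hk as [Hk1 [Hk2 _]].
    assert (HkM : (M <= k)%nat).
    { destruct (le_lt_dec M k) as [?|Hlt]; auto.
      pose proof (Hdm k Hk1 Hlt). lra. }
    destruct (HN k ltac:(unfold M in HkM; lia)) as [Hlo _].
    assert (Hk1' : 1 <= INR k) by (apply (le_INR 1); exact Hk1).
    assert (Hpm : 1 <= INR k ^ m) by (apply pow_R1_Rle; exact Hk1').
    rewrite Hrk in Hlo.
    pose proof (exp_pos (INR k * - r)).
    assert (Hce : c * exp (INR k * - r) < eps) by nra.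
    assert (Hln : ln (c * exp (INR k * - r)) < ln eps).
    { apply ln_increasing; [apply Rmult_lt_0_compat; lra|exact Hce]. }
    rewrite ln_mult, ln_exp in Hln by (try apply exp_pos; lra).
    assert (Hlc : ln eps < - (2 * Rabs (ln c))).
    { assert (Hq : ln eps < ln (exp (- (2 * Rabs (ln c))))) by (apply ln_increasing; lra).
      rewrite ln_exp in Hq. exact Hq. }
    pose proof (Rle_abs (- ln c)) as Hab. rewrite Rabs_Ropp in Hab.
    rewrite HL by lra.
    replace ((1 - rho) / (2 * r * rho) * (rho / (1 - rho) * - ln eps)) with (- ln eps / (2 * r)) by (field; lra).
    apply Rmult_le_reg_r with (2 * r); [lra|].
    replace (- ln eps / (2 * r) * (2 * r)) with (- ln eps) by (field; lra).
    nra. }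
  split; [exact KOm|]. split.
  - replace (fun eps => 1 / (1 - rho) * ln (1 / eps)) with (fun eps => 1 / (1 - rho) * ln (1 / eps)) by reflexivity.
    apply KO. lra.
  - split; [exact KOm|]. apply KO. lra.
Qed.
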